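(* Let $c>0$, $\varepsilon>0$, let $\mathcal{D}$ be a distribution over $\mathbb{R}^k_{\ge0}$ with $\mathrm{BRev}(\mathcal{D})<\infty$, let $M$ be a $c$-expensive mechanism that is oddly-priced or evenly-priced, and let $(X,Q)$ be an $\varepsilon$-representative sequence for $M,\mathcal{D}$. Then \[\mathrm{MenuGap}(X,Q)\ge\frac{\mathrm{Rev}(\mathcal{D},M)}{4(1+\varepsilon)\,\mathrm{BRev}(\mathcal{D})}.\]
   Context: Setting: one seller, one additive buyer, $k$ items; the buyer's value vector $\vec v\in\mathbb{R}^k_{\ge0}$ is drawn from a distribution $\mathcal{D}$. A mechanism $M$ is a set of options $(\vec q,p)$ with $\vec q\in[0,1]^k$, $p\in\mathbb{R}$, always containing the null option $(\vec 0,0)$; a buyer with values $\vec v$ selects an option maximizing $\vec v\cdot\vec q-p$ (ties broken arbitrarily; a maximizer is assumed to exist), and $\vec q^M(\vec v),p^M(\vec v)$ denote the allocation and price of the selected option. $\mathrm{Rev}(\mathcal{D},M)=\mathbb{E}_{\vec v\sim\mathcal{D}}[p^M(\vec v)]$; $\mathrm{BRev}(\mathcal{D})=\sup_{p\ge0} p\cdot\Pr_{\vec v\sim\mathcal{D}}[\sum_i v_i\ge p]$. A mechanism is $c$-expensive if every option other than the null option has price at least $c$; a $c$-expensive mechanism is oddly-priced (resp. evenly-priced) if every non-null option has price in $[c2^i,c2^{i+1})$ for some odd (resp. even) integer $i$. $\varepsilon$-representative sequence for $M,\mathcal{D}$: set $\vec q_0=\vec 0$; let $a=1$ if $M$ is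 oddly-priced and $a=0$ if evenly-priced; for $j\in\mathbb{N}_+$ let $B_j:=\{\vec v\in\mathrm{supp}(\mathcal{D}): p^M(\vec v)\in[c2^{2(j-1)+a},c2^{2(j-1)+a+1})\}$; for each $j$ with $B_j\neq\emptyset$ pick $\vec x_j\in B_j$ with $\|\vec x_j\|_1\le(1+\varepsilon)\|\vec v\|_1$ for all $\vec v\in B_j$, and set $\vec q_j:=\vec q^M(\vec x_j)$; indices $j$ with $B_j=\emptyset$ are omitted (later indices shifted down). $X=(\vec x_j)_{j\ge1}$, $Q=(\vec q_j)_{j\ge0}$. MenuGap: for a sequence $X=(\vec x_i)_{i=1}^N$ of nonzero points of $\mathbb{R}^k_{\ge0}$ and $Q=(\vec q_i)_{i=0}^N\subset[0,1]^k$ with $\vec q_0=\vec0$, $\mathrm{gap}_i^{X,Q}:=\min_{0\le j<i}(\vec q_i-\vec q_j)\cdot\vec x_i$ and $\mathrm{MenuGap}(X,Q):=\sum_{i=1}^N \mathrm{gap}_i^{X,Q}/\|\vec x_i\|_1$. *)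

(* Defs.v *)
From HB Require Import structures.
From mathcomp Require Import all_boot all_order all_algebra.
From mathcomp Require Import all_classical all_reals all_analysis.
Set Implicit Arguments. Unset Strict Implicit. Unset Printing Implicit Defensive.
Import Order.TTheory GRing.Theory Num.Theory.
Local Open Scope classical_set_scope.
Local Open Scope ring_scope.

Section Defs.
Variable R : realType.
Variable k : nat.

Definition vec := 'I_k -> R.
Definition dotv (x y : vec) : R := \sum_(i < k) x i * y i.
Definition norm1 (x : vec) : R := \sum_(i < k) `|x i|.
Definition zerov : vec := fun _ => 0.
Definition subv (x y : vec) : vec := fun i => x i - y i.

Definition option_t := (vec * R)%type.
Definition null_option : option_t := (zerov, 0).

Definition is_mechanism (M : set option_t) : Prop :=
  M null_option /\ forall o, M o -> forall i, 0 <= o.1 i <= 1.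

Definition utility (v : vec) (o : option_t) : R := dotv v o.1 - o.2.

(* (qM, pM) is the buyer's choice rule: for every v in R^k_{>=0} it selects a
   utility-maximizing option of M (ties broken arbitrarily) *)
Definition is_selection (M : set option_t) (qM : vec -> vec) (pM : vec -> R) : Prop :=
  forall v : vec, (forall i, 0 <= v i) ->
    M (qM v, pM v) /\ forall o, M o -> utility v o <= utility v (qM v, pM v).

Definition c_expensive (c : R) (M : set option_t) : Prop :=
  forall o, M o -> o <> null_option -> c <= o.2.

Definition oddly_priced (c : R) (M : set option_t) : Prop :=
  c_expensive c M /\
  forall o, M o -> o <> null_option ->
    exists i : int, odd (absz i) /\ c * 2 ^ i <= o.2 < c * 2 ^ (i + 1).

Definition evenly_priced (c : R) (M : set option_t) : Prop :=
  c_expensive c M /\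
  forall o, M o -> o <> null_option ->
    exists i : int, ~~ odd (absz i) /\ c * 2 ^ i <= o.2 < c * 2 ^ (i + 1).

(* The distribution D over R^k_{>=0} is given as the law of a random vector
   V : T -> vec on a probability space (T, P) with measurable coordinates. *)
Variables (d : measure_display) (T : measurableType d) (P : probability T R).

Definition random_vector (V : T -> vec) : Prop :=
  (forall i, measurable_fun setT (fun t => V t i)) /\ (forall t i, 0 <= V t i).

(* (closed) support of the law of V *)
Definition near_set (V : T -> vec) (x : vec) (e : R) : set T :=
  [set t | forall i, `|V t i - x i| < e].

Definition supp (V : T -> vec) : set vec :=
  [set x | forall e : R, 0 < e -> (0 < P (near_set V x e))%E].

Definition Rev (V : T -> vec) (pM : vec -> R) : \bar R :=
  (\int[P]_t (pM (V t))%:E)%E.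

Definition sum_ge (V : T -> vec) (p : R) : set T :=
  [set t | p <= \sum_(i < k) V t i].

Definition BRev (V : T -> vec) : \bar R :=
  ereal_sup [set (p%:E * P (sum_ge V p))%E | p in [set p : R | 0 <= p]].

Definition bucket (V : T -> vec) (pM : vec -> R) (c : R) (a j : nat) : set vec :=
  [set v | supp V v /\
     c * 2 ^+ (2 * (j - 1) + a) <= pM v < c * 2 ^+ (2 * (j - 1) + a + 1)].

(* index range of a sequence of length N (None = infinite): 1 <= i <= N *)
Definition in_range (N : option nat) (i : nat) : Prop :=
  (1 <= i)%N /\ match N with Some n => (i <= n)%N | None => True end.

(* (X, Q) (with X_1.., Q_0.. and length N) is an eps-representative sequence
   for M (choice rule qM, pM), D; jidx enumerates the nonempty buckets in
   increasing order (empty buckets omitted, later indices shifted down). *)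
Definition eps_rep_seq (V : T -> vec) (qM : vec -> vec) (pM : vec -> R)
    (c eps : R) (a : nat) (N : option nat) (X Q : nat -> vec) : Prop :=
  Q 0%N = zerov /\
  exists jidx : nat -> nat,
    (forall i i', in_range N i -> in_range N i' -> (i < i')%N ->
        (jidx i < jidx i')%N) /\
    (forall i, in_range N i ->
        (1 <= jidx i)%N /\
        bucket V pM c a (jidx i) (X i) /\
        (forall v, bucket V pM c a (jidx i) v -> norm1 (X i) <= (1 + eps) * norm1 v) /\
        Q i = qM (X i)) /\
    (forall j, (1 <= j)%N -> bucket V pM c a j !=set0 ->
        exists i, in_range N i /\ jidx i = j).

End Defs.

Section MenuGapDef.
Variables (R : realType) (k : nat).

Definition gap (X Q : nat -> vec R k) (i : nat) : R :=
  \big[Num.min/dotv (subv (Q i) (Q 0%N)) (X i)]_(j < i)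
     dotv (subv (Q i) (Q j)) (X i).

Definition MenuGap (N : option nat) (X Q : nat -> vec R k) : \bar R :=
  match N with
  | Some n => (\sum_(1 <= i < n.+1) (gap X Q i / norm1 (X i)))%:E
  | None => (\sum_(1 <= i <oo) (gap X Q i / norm1 (X i))%:E)%E
  end.

End MenuGapDef.

(* Main.v *)
Require Import Defs.
From HB Require Import structures.
From mathcomp Require Import all_boot all_order all_algebra.
From mathcomp Require Import all_classical all_reals all_analysis.
From mathcomp Require Import ring lra zify measurable_realfun.
Import Order.TTheory GRing.Theory Num.Theory.
Local Open Scope classical_set_scope.
Local Open Scope ring_scope.
Set Implicit Arguments.
Section Aux.
Context (R : realType) (k : nat) (d : measure_display) (T : measurableType d)
  (P : probability T R) (V : T -> vec R k).
Hypothesis mV : forall i, measurable_fun setT (fun t => V t i).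

Lemma mnear x e : measurable (near_set V x e).
Proof.
have -> : near_set V x e = \bigcap_(i in [set: 'I_k]) [set t | `|V t i - x i| < e].
  by apply/seteqP; split => t /=; [move=> H i _; exact: H | move=> H i; exact: H].
apply: fin_bigcap_measurable; first exact: finite_finset.
move=> i _.
have mf : measurable_fun setT (fun t => `|V t i - x i|).
  apply: measurableT_comp => //; apply: measurable_realfun.measurable_funB => //.
have := mf measurableT _ (measurable_itv `]-oo, e[).
rewrite setTI; congr measurable; apply/seteqP; split => t /=; rewrite in_itv //=.
Qed.

Lemma supp_ae : P.-negligible (~` [set t | supp P V (V t)]).
Proof.
pose I := ({ffun 'I_k -> rat} * nat)%type.
pose ratv (y : {ffun 'I_k -> rat}) : vec R k := fun i => ratr (y i).
pose F (m : nat) : set T := match (unpickle m : option I) with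
  | Some (y, n) => if P (near_set V (ratv y) n.+1%:R^-1) == 0%E
                   then near_set V (ratv y) n.+1%:R^-1 else set0
  | None => set0 end.
apply: (@negligibleS _ _ _ _ (\bigcup_m F m)); last first.
  apply: negligible_bigcup => m; rewrite /F.
  case: (unpickle m) => [[y n]|]; last exact: negligible_set0.
  case: eqP => [H0|_]; last exact: negligible_set0.
  by exists (near_set V (ratv y) n.+1%:R^-1); split => //; exact: mnear.
move=> t /= /not_forallP /contrapT [e].
move=> /not_implyP [e0 /negP]; rewrite -leNgt => Pe.
have Pe0 : P (near_set V (V t) e) = 0%E by apply/eqP; rewrite eq_le Pe measure_ge0.
have [n hn] : exists n : nat, 0 + n.+1%:R^-1 < e / 2 by apply: ltr_add_invr; rewrite divr_gt0.
rewrite add0r in hn.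
pose del : R := n.+1%:R^-1.
have del0 : 0 < del by rewrite invr_gt0.
have : forall i : 'I_k, exists q : rat, ratr q \in `]V t i - del, V t i + del[.
  by move=> i; apply: rat_in_itvoo; rewrite ltrD2l gtrN.
move=> /fin_all_exists [q hq].
pose y : {ffun 'I_k -> rat} := [ffun i => q i].
exists (pickle ((y, n) : I)) => //.
rewrite /F pickleK.
have sub : near_set V (ratv y) del `<=` near_set V (V t) e.
  move=> s /= hs i.
  have := hs i; rewrite /ratv ffunE => h1.
  have := hq i; rewrite in_itv /= => /andP[h2 h3].
  rewrite (le_lt_trans (ler_distD (ratr (q i)) _ _))//.
  have h5 : `|ratr (q i) - V t i| < del by rewrite distrC ltr_distlC h2 h3.
  have hn' : del < e / 2 by [].
  lra.
have -> : P (near_set V (ratv y) n.+1%:R^-1) == 0%E.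
  rewrite eq_le measure_ge0 andbT -Pe0 le_measure // inE; exact: mnear.
move=> i; rewrite /ratv ffunE.
have := hq i; rewrite in_itv /= => /andP[h2 h3].
by rewrite ltr_distlC h2 h3.
Qed.

End Aux.
Set Implicit Arguments.
Section Aux2.
Context (R : realType) (k : nat) (M : set (option_t R k))
  (qM : vec R k -> vec R k) (pM : vec R k -> R) (c : R) (a : nat).
Hypothesis c0 : 0 < c.
Hypothesis hM : is_mechanism M.
Hypothesis hsel : is_selection M qM pM.
Hypothesis hexp : c_expensive c M.
Hypothesis hpar : (a = 1%N /\ oddly_priced c M) \/ (a = 0%N /\ evenly_priced c M).

Definition nonneg (v : vec R k) := forall i, 0 <= v i.

Lemma dot_ge (v : vec R k) : nonneg v -> pM v <= dotv v (qM v).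
Proof.
move=> v0; have [_ /(_ (null_option R k)) H] := hsel _ v0.
have := H (proj1 hM); rewrite /utility /= /dotv /zerov.
rewrite big1 ?sub0r; last by move=> i _; rewrite mulr0.
by rewrite oppr0 subr_ge0.
Qed.

Lemma pM_cases (v : vec R k) : nonneg v -> pM v = 0 \/ c <= pM v.
Proof.
move=> v0; have [Hm _] := hsel _ v0.
case: (pselect ((qM v, pM v) = null_option R k)) => [[_ ->]|hn]; first by left.
by right; exact: (hexp Hm hn).
Qed.

Lemma pM_ge0 (v : vec R k) : nonneg v -> 0 <= pM v.
Proof. by move=> v0; case: (pM_cases v0) => [->//|]; apply: le_trans; exact: ltW. Qed.

Lemma dot_le_norm (v q : vec R k) : nonneg v -> (forall i, 0 <= q i <= 1) ->
  dotv v q <= norm1 v.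
Proof.
move=> v0 q01; rewrite /dotv /norm1; apply: ler_sum => i _.
rewrite ger0_norm //; have /andP[_ h] := q01 i.
by rewrite ler_piMr.
Qed.

Lemma bucket_of (v : vec R k) : nonneg v -> pM v != 0 ->
  exists j : nat, (1 <= j)%N /\
    c * 2 ^+ (2 * (j - 1) + a) <= pM v < c * 2 ^+ (2 * (j - 1) + a + 1).
Proof.
move=> v0 pn0; have [Hm _] := hsel _ v0.
have hn : (qM v, pM v) <> null_option R k by move=> [_ h]; rewrite h eqxx in pn0.
have cp : c <= pM v by exact: (hexp Hm hn).
have [z [hz1 hz2]] : exists z : int, (odd (absz z) = (a == 1%N)) /\
    c * 2 ^ z <= pM v < c * 2 ^ (z + 1).
  case: hpar => [[-> [_ H]]|[-> [_ H]]]; have [z [hz h]] := H _ Hm hn;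
    exists z; split => //; by move/negbTE: hz.
case: z hz1 hz2 => [m|m] hz1.
- rewrite -PoszD /= => /andP[h1 h2].
  exists (m./2 + 1)%N; split; first by rewrite addn1.
  have -> : (2 * (m./2 + 1 - 1) + a)%N = m.
    have a01 : (a <= 1)%N by case: hpar => [[->]|[->]].
    have ha : a = (a == 1%N) :> nat by case: (a) a01 => [|[|]].
    by rewrite addnK [X in (_ + X)%N]ha -hz1 -{3}(odd_double_half m) addnC mul2n.
  by apply/andP; split; [exact: h1|exact: h2].
- move=> /andP[_ h2]; exfalso.
  have : 2 ^ (Negz m + 1) <= (1 : R).
    rewrite NegzE (_ : - (Posz m.+1) + 1 = - (Posz m)); last first.
      by rewrite -addn1 PoszD opprD addrK.
    by rewrite -exprnN invf_le1 ?exprn_ege1 ?exprn_gt0 ?ler1n.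
  move=> h; have := lt_le_trans h2 (ler_wpM2l (ltW c0) h).
  by rewrite mulr1 ltNge cp.
Qed.

End Aux2.
Unset Implicit Arguments.
Theorem proposition4p6 (R : realType) (k : nat)
  (d : measure_display) (T : measurableType d) (P : probability T R)
  (V : T -> vec R k)
  (M : set (option_t R k)) (qM : vec R k -> vec R k) (pM : vec R k -> R)
  (c eps : R) (a : nat) (N : option nat) (X Q : nat -> vec R k) :
  0 < c -> 0 < eps ->
  random_vector V ->
  (BRev P V < +oo)%E ->
  is_mechanism M ->
  is_selection M qM pM ->
  measurable_fun setT (fun t => pM (V t)) ->
  c_expensive c M ->
  ((a = 1%N /\ oddly_priced c M) \/ (a = 0%N /\ evenly_priced c M)) ->
  eps_rep_seq P V qM pM c eps a N X Q ->
  (Rev P V pM / ((4 * (1 + eps))%:E * BRev P V) <= MenuGap N X Q)%E.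
Proof.
move=> c0 eps0 [mV V0] BRfin hM hsel mpM hexp hpar [Q0 [jidx [jinc [jprop jsurj]]]].
pose inr (n : nat) : bool := (1 <= n)%N && (if N is Some m then (n <= m)%N else true).
have inrP n : in_range N n <-> inr n.
  rewrite /in_range /inr; case: {+}N => [m|]; split.
  - by move=> [-> ->].
  - by move=> /andP[-> ->].
  - by move=> [->].
  - by rewrite andbT => ->.
pose L (j : nat) : R := c * 2 ^+ (2 * (j - 1) + a).
have L0 j : 0 < L j by rewrite mulr_gt0 // exprn_gt0.
have Vn t : nonneg (V t) by move=> i; exact: V0.
have Xn i : in_range N i -> nonneg (X i).
  move=> /jprop [_ [[supX _] _]] l; rewrite leNgt; apply/negP => hl.
  have /supX : 0 < - X i l by rewrite oppr_gt0.
  have -> : near_set V (X i) (- X i l) = set0.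
    apply/seteqP; split => t //= /(_ l); rewrite ltNge => /negP; apply.
    by rewrite ger0_norm ?lerDr ?subr_ge0 ?(le_trans (ltW hl)) ?V0.
  by rewrite measure0 ltxx.
have Xprice i : in_range N i -> L (jidx i) <= pM (X i) < 2 * L (jidx i).
  move=> /jprop [_ [[_ /andP[h1 h2]] _]]; rewrite h1 /=.
  by move: h2; rewrite addn1 exprS mulrCA.
have Xdot i : in_range N i -> L (jidx i) <= dotv (X i) (Q i).
  move=> hi; have [_ [_ [_ ->]]] := jprop _ hi.
  have /andP[h _] := Xprice _ hi; apply: (le_trans h); exact: (dot_ge hM hsel (Xn _ hi)).
have Xnorm i : in_range N i -> 0 < norm1 (X i).
  move=> hi; apply: (lt_le_trans (L0 (jidx i))); apply: (le_trans (Xdot _ hi)).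
  have [_ [_ [_ ->]]] := jprop _ hi; apply: dot_le_norm; first exact: Xn.
  have [_ Hq] := hM; apply: (Hq (qM (X i), pM (X i))).
  by have [] := hsel _ (Xn _ hi).
have Lmono j j' : (1 <= j)%N -> (j < j')%N -> 4 * L j <= L j'.
  move=> hj hjj; rewrite /L mulrCA ler_pM2l //.
  have -> : (2 * (j' - 1) + a = (2 * (j - 1) + a) + 2 + 2 * (j' - 1 - j))%N by lia.
  rewrite (exprD 2 (2 * (j - 1) + a + 2)) (exprD 2 (2 * (j - 1) + a) 2).
  set x := 2 ^+ (2 * (j - 1) + a).
  have x0 : 0 <= x by rewrite exprn_ge0.
  have h1 : 1 <= (2 : R) ^+ (2 * (j' - 1 - j)) by rewrite exprn_ege1 // ler1n.
  have -> : (2 : R) ^+ 2 = 4 by rewrite expr2; lra.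
  nra.
have dotsub (u w x : vec R k) : dotv (subv u w) x = dotv x u - dotv x w.
  rewrite /dotv /subv -sumrB; apply: eq_bigr => l _; ring.
have Xgap i : in_range N i -> L (jidx i) / 2 <= gap X Q i.
  move=> hi; have Li := L0 (jidx i).
  have h0 : L (jidx i) / 2 <= dotv (subv (Q i) (Q 0%N)) (X i).
    rewrite dotsub Q0.
    have -> : dotv (X i) (@zerov R k) = 0 by rewrite /dotv big1 // => l _; rewrite /zerov mulr0.
    rewrite subr0.
    apply: le_trans (Xdot _ hi); lra.
  rewrite /gap; apply: (big_ind (fun x => L (jidx i) / 2 <= x)) => //.
    by move=> x y hx hy; rewrite le_min hx hy.
  move=> [j hj] _ /=.
  case: j hj => [|j] hj; first exact: h0.
  have hjr : in_range N j.+1.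
    move: hi; rewrite /in_range; case: {+}N => [m|] [_ hm]; split => //; lia.
  have [Hm Hopt] := hsel _ (Xn _ hi).
  have [Hmj _] := hsel _ (Xn _ hjr).
  have := Hopt _ Hmj; rewrite /utility /=.
  have [_ [_ [_ ->]]] := jprop _ hi.
  have [_ [_ [_ ->]]] := jprop _ hjr.
  rewrite dotsub => hu.
  have /andP[hpi _] := Xprice _ hi.
  have /andP[_ hpj] := Xprice _ hjr.
  have hjj : (jidx j.+1 < jidx i)%N by apply: jinc.
  have := Lmono _ _ (proj1 (jprop _ hjr)) hjj.
  lra.
have BR0 : (0 <= BRev P V)%E.
  apply: (@ereal_sup_ubound _ _ 0%E); exists 0 => //=; by rewrite mul0e.
pose b := fine (BRev P V).
have Bb : BRev P V = b%:E by rewrite fineK // ge0_fin_numE.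
have b0 : 0 <= b by rewrite -lee_fin -Bb.
pose r n := norm1 (X n) / (1 + eps).
pose A n := sum_ge V (r n).
have mA n : measurable (A n).
  rewrite /A /sum_ge -[X in measurable X]setTI.
  apply: (@measurable_fun_le _ _ _ _ (fun _ => r n) (fun t => \sum_(i < k) V t i)) => //.
  by apply: measurable_sum => i; exact: mV.
have BA n : in_range N n -> ((r n)%:E * P (A n) <= b%:E)%E.
  move=> hn; rewrite -Bb; apply: ereal_sup_ubound; exists (r n) => //=.
  by rewrite /r divr_ge0 ?(ltW (Xnorm _ hn)) // addr_ge0 // ltW.
pose C n := if inr n then 2 * L (jidx n) else 0.
have C0 n : 0 <= C n by rewrite /C; case: ifP => // _; rewrite mulr_ge0 // ltW.
pose f : nat -> T -> \bar R := fun n t => ((C n) * \1_(A n) t)%:E.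
have f0 n t : (0 <= f n t)%E by rewrite lee_fin mulr_ge0 // indicE; case: (_ \in _).
have mf n : measurable_fun setT (f n).
  apply/measurable_EFinP; apply: measurable_realfun.measurable_funM.
    exact: measurable_cst.
  exact: measurable_indic.
have step1 : (Rev P V pM <= \int[P]_t (\sum_(n <oo) f n t))%E.
  rewrite /Rev; apply: ae_ge0_le_integral => //.
  - by move=> t _; rewrite lee_fin; exact: (pM_ge0 c0 hsel hexp (Vn t)).
  - exact/measurable_EFinP.
  - by move=> t _; apply: nneseries_ge0 => n _ _; exact: f0.
  - exact: (@ge0_emeasurable_sum _ _ _ setT f xpredT (fun k x _ _ => f0 k x) (fun k _ => mf k)).
  suff H : P.-negligible (~` [set t | [set: T] t ->
      ((pM (V t))%:E <= \sum_(n <oo) f n t)%E]) by exact: H.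
  apply: (negligibleS _ (supp_ae P V mV)).
  move=> t /= nH Hs; apply: nH => _.
  case: (eqVneq (pM (V t)) 0) => [->|pn0].
    by apply: nneseries_ge0 => n _ _; exact: f0.
  have [j [j1 hj]] := bucket_of c0 hsel hexp hpar (Vn t) pn0.
  have hB : bucket P V pM c a j (V t) by split.
  have [i [hi ji]] := jsurj j j1 (ex_intro _ (V t) hB).
  apply: (le_trans _ (nneseries_lim_ge i.+1 (fun n _ _ => f0 n t))).
  rewrite big_nat_recr //=; apply: lee_paddl.
    by apply: sume_ge0 => n _; exact: f0.
  have hi' : inr i by apply/inrP.
  have At : A i t.
    rewrite /A /sum_ge /r /= ler_pdivrMr; last by rewrite addr_gt0.
    have [_ [_ [H _]]] := jprop _ hi.
    rewrite ji in H; have := H _ hB.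
    have -> : norm1 (V t) = \sum_(l < k) V t l.
      by apply: eq_bigr => l _; rewrite ger0_norm.
    by rewrite mulrC.
  rewrite /f /C hi' indicE mem_set // mulr1 lee_fin ji; apply: ltW.
  by have /andP[_ h2] := hj; move: h2; rewrite addn1 exprS mulrCA.
have step2 : (\int[P]_t (\sum_(n <oo) f n t) = \sum_(n <oo) ((C n)%:E * P (A n)))%E.
  rewrite integral_nneseries //; apply: eq_eseriesr => n _.
  rewrite /f; under eq_integral do rewrite EFinM.
  by rewrite ge0_integralZl_EFin // ?integral_indic // ?setIT //; exact/measurable_EFinP/measurable_indic.
pose K := 4 * (1 + eps) * b.
pose g' n := if inr n then gap X Q n / norm1 (X n) else 0.
have g'0 n : 0 <= g' n.
  rewrite /g'; case: ifP => // hn; have hn' : in_range N n by apply/inrP.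
  rewrite divr_ge0 ?(ltW (Xnorm _ hn')) //; apply: le_trans (Xgap _ hn').
  by rewrite divr_ge0 // ltW.
have step3 : (\sum_(n <oo) ((C n)%:E * P (A n)) <= \sum_(n <oo) (K * g' n)%:E)%E.
  apply: lee_nneseries => [n _ _|n _]; first by rewrite mule_ge0 // lee_fin.
  rewrite /C /g'; case: ifP => hn; last by rewrite mul0e mulr0.
  have hn' : in_range N n by apply/inrP.
  have := BA n hn'.
  have Pfin : P (A n) = (fine (P (A n)))%:E.
    rewrite fineK // ge0_fin_numE ?measure_ge0 //.
    by rewrite (le_lt_trans (probability_le1 P (mA n))) ?ltey.
  have p0 : 0 <= fine (P (A n)) by rewrite fine_ge0 // measure_ge0.
  rewrite Pfin -!EFinM !lee_fin; set p := fine (P (A n)) => hB.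
  have hG := Xgap n hn'; have hX := Xnorm n hn'; have hL := L0 (jidx n).
  move: hB; rewrite /r mulrAC ler_pdivrMr; last by rewrite addr_gt0.
  move=> hB.
  rewrite /K mulrA ler_pdivlMr //.
  have pX : 0 <= p * norm1 (X n) by rewrite mulr_ge0 // ltW.
  nra.
have step4 : (\sum_(n <oo) (K * g' n)%:E = K%:E * \sum_(n <oo) (g' n)%:E)%E.
  rewrite -(@nneseriesZl R (fun n => (g' n)%:E) xpredT K 0%N) //.
  by move=> i _; rewrite lee_fin.
have MG : (\sum_(n <oo) (g' n)%:E = MenuGap N X Q)%E.
  have g'00 : g' 0%N = 0 by rewrite /g' /inr.
  rewrite /MenuGap; case EN : N => [n|].
    rewrite (nneseries_split _ n.+1); last by move=> m _; rewrite lee_fin.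
    rewrite eseries0 ?adde0; last first.
      by move=> m hm _; rewrite /g' /inr EN; case: ifP => //; lia.
    rewrite add0n sumEFin big_ltn // g'00 add0r; congr EFin.
    apply: eq_big_nat => i /andP[hi1 hi2].
    by rewrite /g' /inr EN hi1 /=; case: ifP => //; lia.
  rewrite (nneseries_split _ 1); last by move=> m _; rewrite lee_fin.
  rewrite add0n big_nat1 g'00 add0e.
  apply/congr_lim/funext => m; apply: eq_big_nat => i /andP[hi _].
  by rewrite /g' /inr EN hi.
have key : (Rev P V pM <= K%:E * MenuGap N X Q)%E.
  by apply: (le_trans step1); rewrite step2 -MG -step4; exact: step3.
have Rev0 : (0 <= Rev P V pM)%E.
  by apply: integral_ge0 => t _; rewrite lee_fin; exact: (pM_ge0 c0 hsel hexp (Vn t)).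
have MG0 : (0 <= MenuGap N X Q)%E.
  by rewrite -MG; apply: nneseries_ge0 => n _ _; rewrite lee_fin.
rewrite Bb -EFinM -/K.
have K0 : 0 <= K by rewrite /K mulr_ge0 // mulr_ge0 // addr_ge0 // ltW.
case: (eqVneq K 0) => [Ke|Kn].
  move: key; rewrite Ke mul0e => key.
  have -> : Rev P V pM = 0%E by apply/eqP; rewrite eq_le key Rev0.
  by rewrite mul0e.
have Kp : 0 < K by rewrite lt_neqAle eq_sym Kn K0.
by rewrite inver (negbTE Kn) lee_pdivrMr // muleC.
Qed.
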